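(* In the setting of the context, for each $u\in U$ let $\mathbf{I}_u$ indicate whether $u$ is matched by MMP-ALG after the $T$ online rounds, and let $x^*_u=\sum_{e\in E(u)}x^*_e$. Then, when $T\to\infty$ and $|U|=o(\sqrt{T})$, the random variables $\{\mathbf{I}_u:u\in U\}$ are asymptotically independent and each satisfies $\Pr[\mathbf{I}_u=1]\to 1-e^{-x^*_u}$.
   Context: Bipartite graph $G=(U,V,E)$; online rounds $t=1,\dots,T$, in each of which independently at most one $v\in V$ arrives, $v$ with probability $p_v$, $\sum_v p_v\le1$, $r_v=Tp_v\in[0,1]$. Each $u\in U$ can be matched at most once. $E(w)$ denotes the set of edges incident to $w$. $\mathbf{x}^*\in[0,1]^E$ satisfies $\sum_{e\in E(v)}x^*_e\le r_v$ for all $v\in V$ and $\sum_{e\in E(u)}x^*_e\le1$ for all $u\in U$. MMP-ALG: when $v$ arrives, sample at most one edge $e\in E(v)$, each $e$ with probability $x^*_e/r_v$; if $e=(u,v)$ is sampled and $u$ is still unmatched, match $e$, otherwise skip. *)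

(* Defs.v *)
From HB Require Import structures.
From mathcomp Require Import all_boot all_order all_algebra.
From mathcomp Require Import all_classical all_reals all_analysis.
Set Implicit Arguments. Unset Strict Implicit. Unset Printing Implicit Defensive.
Import Order.TTheory GRing.Theory Num.Theory.
Local Open Scope ring_scope.

Definition rate (R : realFieldType) (V : finType) (T : nat) (p : V -> R) (v : V) : R :=
  T%:R * p v.

Definition xstar_u (R : realFieldType) (U V : finType) (E : {set U * V})
  (x : U * V -> R) (u : U) : R :=
  \sum_(v | (u, v) \in E) x (u, v).

(* Outcome of one round: None = nobody arrives;
   Some (v, None) = v arrives and no edge is sampled;
   Some (v, Some u) = v arrives and edge (u, v) is sampled. *)
Definition round_outcome (U V : finType) := option (V * option U).

Definition round_prob (R : realFieldType) (U V : finType) (E : {set U * V})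
  (p : V -> R) (x : U * V -> R) (T : nat) (o : round_outcome U V) : R :=
  match o with
  | None => 1 - \sum_(v : V) p v
  | Some (v, None) =>
      p v * (1 - \sum_(u | (u, v) \in E) x (u, v) / rate T p v)
  | Some (v, Some u) =>
      if (u, v) \in E then p v * (x (u, v) / rate T p v) else 0
  end.

(* One step of MMP-ALG on the set M of matched vertices of U. *)
Definition mmp_step (U V : finType) (M : {set U}) (o : round_outcome U V) : {set U} :=
  match o with
  | Some (_, Some u) => if u \in M then M else (u |: M)%SET
  | _ => M
  end.

Definition mmp_run (U V : finType) (T : nat)
  (w : {ffun 'I_T -> round_outcome U V}) : {set U} :=
  foldl (@mmp_step U V) finset.set0 [seq w t | t <- enum 'I_T].

Definition path_prob (R : realFieldType) (U V : finType) (E : {set U * V})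
  (p : V -> R) (x : U * V -> R) (T : nat)
  (w : {ffun 'I_T -> round_outcome U V}) : R :=
  \prod_(t < T) round_prob E p x T (w t).

Definition mmp_marg (R : realFieldType) (U V : finType) (E : {set U * V})
  (p : V -> R) (x : U * V -> R) (T : nat) (u : U) : R :=
  \sum_(w : {ffun 'I_T -> round_outcome U V} | u \in mmp_run w) path_prob E p x w.

Definition mmp_joint (R : realFieldType) (U V : finType) (E : {set U * V})
  (p : V -> R) (x : U * V -> R) (T : nat) (b : {ffun U -> bool}) : R :=
  \sum_(w : {ffun 'I_T -> round_outcome U V} | [ffun u => u \in mmp_run w] == b)
     path_prob E p x w.

Definition mmp_prodmarg (R : realFieldType) (U V : finType) (E : {set U * V})
  (p : V -> R) (x : U * V -> R) (T : nat) (b : {ffun U -> bool}) : R :=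
  \prod_(u : U) (if b u then mmp_marg E p x T u else 1 - mmp_marg E p x T u).

Definition mmp_tv (R : realFieldType) (U V : finType) (E : {set U * V})
  (p : V -> R) (x : U * V -> R) (T : nat) : R :=
  2^-1 * \sum_(b : {ffun U -> bool}) `|mmp_joint E p x T b - mmp_prodmarg E p x T b|.

Definition feasible_instance (R : realFieldType) (U V : finType) (E : {set U * V})
  (p : V -> R) (x : U * V -> R) (T : nat) : Prop :=
  [/\ (forall v, 0 <= p v),
      \sum_(v : V) p v <= 1 /\ (forall v, rate T p v <= 1),
      (forall e, e \in E -> 0 <= x e <= 1),
      (forall v, \sum_(u | (u, v) \in E) x (u, v) <= rate T p v) &
      (forall u, \sum_(v | (u, v) \in E) x (u, v) <= 1)].

(* Main.v *)
Require Import Defs.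
From HB Require Import structures.
From mathcomp Require Import all_boot all_order all_algebra.
From mathcomp Require Import all_classical all_reals all_analysis.
From mathcomp Require Import ring lra.
Import numFieldNormedType.Exports.
Import Order.TTheory GRing.Theory Num.Theory.
Set Implicit Arguments. Unset Strict Implicit. Unset Printing Implicit Defensive.
Local Open Scope ring_scope.

Section Laws.
Variable (R : realType) (U : finType).
Implicit Types (f g mu nu : {set U} -> R) (M A B C : {set U}).

Definition zeta f M := \sum_(A : {set U} | A \subset M) f A.

Lemma zeta_inj0 f : (forall M, zeta f M = 0) -> forall M, f M = 0.
Proof.
move=> Hz M; have [n] := ubnP #|M|; elim: n M => // n IH M HM.
have := Hz M; rewrite /zeta (bigD1 M) //= big1 ?addr0 //.
move=> A /andP[AM AnM]; apply: IH.
have : A \proper M by rewrite finset.properEneq AnM AM.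
by move/proper_card => H; apply: leq_trans H _.
Qed.

Lemma zeta_inj f g : (forall M, zeta f M = zeta g M) -> forall M, f M = g M.
Proof.
move=> H M; apply/eqP; rewrite -subr_eq0; apply/eqP.
apply: (@zeta_inj0 (fun A => f A - g A)) => N.
by rewrite /zeta sumrB -/(zeta f N) -/(zeta g N) H subrr.
Qed.

Definition conv mu nu C := \sum_(A : {set U}) \sum_(B : {set U}) (A :|: B == C)%:R * (mu A * nu B).

Lemma sum_ind_eq (X : finType) (P : pred X) (a : X) :
  \sum_(c | P c) ((a == c)%:R : R) = (P a)%:R.
Proof.
case: (boolP (P a)) => h.
  rewrite (bigD1 a) //= eqxx big1 ?addr0 // => c /andP[_ /negbTE].
  by rewrite eq_sym => ->.
rewrite big1 // => c hc; have : a != c by apply: contraNneq h => ->.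
by move/negbTE => ->.
Qed.

Lemma zeta_conv mu nu M : zeta (conv mu nu) M = zeta mu M * zeta nu M.
Proof.
rewrite /zeta /conv.
transitivity (\sum_(A : {set U}) \sum_(B : {set U})
   ((A \subset M)%:R * (mu A)) * ((B \subset M)%:R * nu B)).
  rewrite exchange_big /=; apply: eq_bigr => A _.
  rewrite exchange_big /=; apply: eq_bigr => B _.
  rewrite -big_distrl /= sum_ind_eq finset.subUset.
  case: (A \subset M); case: (B \subset M); rewrite /= ?mul1r ?mul0r ?mulr0 //.
rewrite [RHS]big_distrl /= [RHS]big_mkcond /=; apply: eq_bigr => A _.
case: (A \subset M); last by rewrite big1 // => B _; rewrite mul0r mul0r.
rewrite big_distrr /= [RHS]big_mkcond /=; apply: eq_bigr => B _.
by case: (B \subset M); rewrite /= ?mul1r ?mul0r ?mulr0.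
Qed.

Lemma zetaT f : zeta f [set: U]%SET = \sum_A f A.
Proof. by apply: eq_bigl => A; rewrite finset.subsetT. Qed.

Lemma sum_conv mu nu : \sum_C conv mu nu C = (\sum_A mu A) * (\sum_B nu B).
Proof.
by have := zeta_conv mu nu [set: U]%SET; rewrite !zetaT.
Qed.

Lemma norm_conv mu nu :
  \sum_C `|conv mu nu C| <= (\sum_A `|mu A|) * (\sum_B `|nu B|).
Proof.
rewrite -(sum_conv (fun A => `|mu A|) (fun B => `|nu B|)).
apply: ler_sum => C _; rewrite /conv.
apply: le_trans (ler_norm_sum _ _ _) _; apply: ler_sum => A _.
apply: le_trans (ler_norm_sum _ _ _) _; apply: ler_sum => B _.
by rewrite normrM normr_nat normrM.
Qed.

Lemma conv_sub mu1 nu1 mu2 nu2 C :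
  conv mu1 nu1 C - conv mu2 nu2 C =
  conv (fun A => mu1 A - mu2 A) nu1 C + conv mu2 (fun B => nu1 B - nu2 B) C.
Proof.
rewrite /conv -sumrB -big_split /=; apply: eq_bigr => A _.
rewrite -sumrB -big_split /=; apply: eq_bigr => B _.
by rewrite -mulrBr -mulrDr; congr (_ * _); rewrite mulrBl mulrBr addrA subrK.
Qed.

Fixpoint pw (n : nat) (mu : {set U} -> R) : {set U} -> R :=
  if n is n'.+1 then conv (pw n' mu) mu
  else fun A => (A == finset.set0)%:R.

Lemma zeta_pw n mu M : zeta (pw n mu) M = zeta mu M ^+ n.
Proof.
elim: n => [|n IH] /=.
  rewrite expr0 /zeta (bigD1 finset.set0) ?finset.sub0set //= eqxx big1 ?addr0 //.
  by move=> A /andP[_ /negbTE ->].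
by rewrite zeta_conv IH exprSr.
Qed.

Definition L1 f := \sum_A `|f A|.

Lemma pw_sum n mu : \sum_A mu A = 1 -> \sum_A pw n mu A = 1.
Proof.
by move=> H; have := zeta_pw n mu [set: U]%SET; rewrite !zetaT H expr1n.
Qed.

Lemma pw_ge0 n mu : (forall A, 0 <= mu A) -> forall A, 0 <= pw n mu A.
Proof.
move=> H; elim: n => [|n IH] A /=; first by rewrite ler0n.
by apply: sumr_ge0 => B _; apply: sumr_ge0 => C _; rewrite !mulr_ge0.
Qed.

Lemma L1_prob mu : (forall A, 0 <= mu A) -> \sum_A mu A = 1 -> L1 mu = 1.
Proof.
by move=> H1 H2; rewrite /L1 -H2; apply: eq_bigr => A _; rewrite ger0_norm.
Qed.

Lemma L1_pw n mu nu :
  (forall A, 0 <= mu A) -> \sum_A mu A = 1 ->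
  (forall A, 0 <= nu A) -> \sum_A nu A = 1 ->
  L1 (fun A => pw n mu A - pw n nu A) <= n%:R * L1 (fun A => mu A - nu A).
Proof.
move=> m0 m1 n0 n1; elim: n => [|n IH] /=.
  by rewrite mul0r /L1 big1 // => A; rewrite subrr normr0.
rewrite /L1; under eq_bigr => C _ do rewrite conv_sub.
apply: le_trans (ler_sum _ (fun C _ => ler_normD _ _)) _.
rewrite big_split /= mulrSr mulrDl mul1r.
apply: lerD.
  apply: le_trans (norm_conv _ _) _.
  by rewrite -/(L1 mu) L1_prob // mulr1.
apply: le_trans (norm_conv _ _) _.
rewrite -/(L1 (pw n nu)) L1_prob ?mul1r //; first exact: pw_ge0.
exact: pw_sum.
Qed.

Lemma sum_ffun_set (F : {ffun U -> bool} -> R) :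
  \sum_f F f = \sum_(A : {set U}) F [ffun u => u \in A].
Proof.
rewrite (reindex (fun A : {set U} => [ffun u => u \in A])) //.
exists (fun f : {ffun U -> bool} => [set u | f u]) => A _ /=.
  by apply/setP => u; rewrite inE ffunE.
by apply/ffunP => u; rewrite ffunE inE.
Qed.

Definition prodlaw (a : U -> R) (A : {set U}) :=
  \prod_u (if u \in A then a u else 1 - a u).

Lemma zeta_prodlaw a M :
  zeta (prodlaw a) M = \prod_(u | u \notin M) (1 - a u).
Proof.
pose g u (b : bool) := if b then (if u \in M then a u else 0) else 1 - a u.
transitivity (\prod_u \sum_(b : bool) g u b); last first.
  rewrite [RHS]big_mkcond /=; apply: eq_bigr => u _.
  rewrite big_bool /g /=; case: (u \in M) => /=; first by rewrite subrKC.
  by rewrite add0r.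
rewrite bigA_distr_bigA /= sum_ffun_set /zeta [LHS]big_mkcond /=.
apply: eq_bigr => A _; rewrite /prodlaw /g.
case: (boolP (A \subset M)) => h.
  by apply: eq_bigr => u _; rewrite ffunE; case: ifP => // uA; rewrite (fintype.subsetP h u uA).
have [u uA uM] := fintype.subsetPn h.
by rewrite (bigD1 u) //= ffunE uA (negbTE uM) mul0r.
Qed.
End Laws.

Lemma big_option_sum (R : realType) (X : finType) (F : option X -> R) :
  \sum_o F o = F None + \sum_t F (Some t).
Proof.
rewrite (bigD1 None) //=; congr (_ + _).
rewrite (reindex_omap Some id); last by case.
by apply: eq_bigl => t; rewrite eqxx.
Qed.

Lemma big_pair_sum (R : realType) (X Y : finType) (F : X * Y -> R) :
  \sum_p F p = \sum_i \sum_j F (i, j).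
Proof. by rewrite pair_bigA; apply: eq_bigr => -[]. Qed.

Lemma sum_mul_eq (R : realType) (X : finType) (F : X -> R) (a : X) :
  \sum_w F w * (w == a)%:R = F a.
Proof.
rewrite (bigD1 a) //= eqxx mulr1 big1 ?addr0 // => w /negbTE ->.
by rewrite mulr0.
Qed.

Lemma set0_neq1 (X : finType) (u : X) : (finset.set0 == [set u]) = false.
Proof. by apply/eqP => /setP /(_ u); rewrite !inE eqxx. Qed.

Lemma set1_eqE (X : finType) (u w : X) : ([set w] == [set u]) = (w == u).
Proof. by apply/eqP/eqP => [/set1_inj|->]. Qed.

Lemma weier (R : realType) (I : finType) (P : pred I) (a : I -> R) :
  (forall i, 0 <= a i <= 1) ->
  1 - \sum_(i | P i) a i <= \prod_(i | P i) (1 - a i).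
Proof.
move=> ha.
suff [] : 1 - \sum_(i | P i) a i <= \prod_(i | P i) (1 - a i) /\ 0 <= \sum_(i | P i) a i by [].
elim/big_rec2: _ => [|i y1 y2 _ [h hy]]; first by rewrite subr0.
have /andP[h0 h1] := ha i.
have hh : 0 <= (1 - a i) * (y2 - (1 - y1)) by apply: mulr_ge0; rewrite subr_ge0.
have hh2 : 0 <= a i * y1 by apply: mulr_ge0.
split; last by apply: addr_ge0.
move: hh hh2; rewrite !mulrBr !mulrBl !mul1r; lra.
Qed.

Lemma norm_max (R : realType) (y : R) : `|y| = 2 * Num.max y 0 - y.
Proof.
case: (lerP 0 y) => h.
  by rewrite ger0_norm //; lra.
by rewrite ltr0_norm //; lra.
Qed.

Section Round.
Variables (R : realType) (U V : finType) (E : {set U * V}) (p : V -> R)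
  (x : U * V -> R) (T : nat).
Hypothesis T0 : (0 < T)%N.
Hypothesis Hf : feasible_instance E p x T.
Implicit Types (M N S A : {set U}).

Local Notation rho := (round_prob E p x T).

Definition hit (o : round_outcome U V) : {set U} :=
  match o with Some (_, Some u) => [set u] | _ => finset.set0 end.

Lemma p_ge0 v : 0 <= p v.
Proof. by case: Hf. Qed.

Lemma rate_ge0 v : 0 <= rate T p v.
Proof. by rewrite /rate mulr_ge0 ?ler0n ?p_ge0. Qed.

Lemma x_ge0 e : e \in E -> 0 <= x e.
Proof. by case: Hf => _ _ H _ _ /H /andP[]. Qed.

Lemma x_le_sum u v : (u, v) \in E ->
  x (u, v) <= \sum_(u' | (u', v) \in E) x (u', v).
Proof.
move=> h; rewrite (bigD1 u) //= lerDl; apply: sumr_ge0 => w /andP[hw _].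
exact: x_ge0.
Qed.

Lemma S_le1 v : \sum_(u | (u, v) \in E) x (u, v) / rate T p v <= 1.
Proof.
rewrite -mulr_suml; have := rate_ge0 v; rewrite le0r => /orP[/eqP->|hr].
  by rewrite invr0 mulr0 ler01.
by rewrite ler_pdivrMr // mul1r; case: Hf => _ _ _ ->.
Qed.

Lemma S_ge0 v : 0 <= \sum_(u | (u, v) \in E) x (u, v) / rate T p v.
Proof.
apply: sumr_ge0 => u h; apply: divr_ge0; [exact: x_ge0 | exact: rate_ge0].
Qed.

Lemma rho_ge0 o : 0 <= rho o.
Proof.
case: o => [[v [u|]]|] /=.
- case: ifP => // h; apply: mulr_ge0; first exact: p_ge0.
  apply: divr_ge0; [exact: x_ge0 | exact: rate_ge0].
- by apply: mulr_ge0; [exact: p_ge0 | rewrite subr_ge0 S_le1].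
- by rewrite subr_ge0; case: Hf => _ [].
Qed.

Lemma rho_sum : \sum_o rho o = 1.
Proof.
rewrite big_option_sum big_pair_sum /=.
transitivity (1 - \sum_v p v + \sum_v p v); last by rewrite subrK.
congr (_ + _); apply: eq_bigr => v _; rewrite big_option_sum /= -big_mkcond /= -mulr_sumr.
by rewrite mulrBr mulr1 subrK.
Qed.

Lemma xv0 u v : (u, v) \in E -> p v = 0 -> x (u, v) = 0.
Proof.
move=> h pv; apply/eqP; rewrite eq_le x_ge0 // andbT.
apply: (le_trans (x_le_sum h)); case: Hf => _ _ _ H _.
by apply: (le_trans (H v)); rewrite /rate pv mulr0.
Qed.

Definition q u := xstar_u E x u / T%:R.

Lemma rho_hit u : \sum_v rho (Some (v, Some u)) = q u.
Proof.
rewrite /q /xstar_u mulr_suml /= -big_mkcond /=; apply: eq_bigr => v h.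
have [pv|pv] := eqVneq (p v) 0; first by rewrite pv (xv0 h pv) !mul0r.
have T0' : T%:R != 0 :> R by rewrite pnatr_eq0 -lt0n.
rewrite /rate; field; rewrite ?T0' ?pv //.
Qed.

Definition alpha (A : {set U}) := \sum_o rho o * (hit o == A)%:R.

Lemma alpha_ge0 (A : {set U}) : 0 <= alpha A.
Proof. by apply: sumr_ge0 => o _; rewrite mulr_ge0 ?rho_ge0 ?ler0n. Qed.

Lemma zeta_alpha (M : {set U}) :
  \sum_(A : {set U} | A \subset M) alpha A = \sum_o rho o * (hit o \subset M)%:R.
Proof.
rewrite /alpha exchange_big /=; apply: eq_bigr => o _.
rewrite -mulr_sumr; congr (_ * _).
case: (boolP (hit o \subset M)) => h.
  rewrite (bigD1 (hit o)) //= eqxx big1 ?addr0 // => A /andP[_ /negbTE].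
  by rewrite eq_sym => ->.
rewrite big1 // => A hA; have : hit o != A by apply: contraNneq h => ->.
by move/negbTE => ->.
Qed.

Lemma alpha_sum : \sum_A alpha A = 1.
Proof.
have -> : \sum_A alpha A = \sum_(A : {set U} | A \subset [set: U]%SET) alpha A.
  by apply: eq_bigl => A; rewrite finset.subsetT.
rewrite -rho_sum.
by rewrite zeta_alpha; apply: eq_bigr => o _; rewrite finset.subsetT mulr1.
Qed.

Lemma alpha1 u : alpha [set u] = q u.
Proof.
rewrite /alpha big_option_sum /= set0_neq1 mulr0 add0r big_pair_sum /=.
rewrite -rho_hit; apply: eq_bigr => v _.
rewrite big_option_sum /= set0_neq1 mulr0 add0r.
under eq_bigr => w _ do rewrite set1_eqE.
by rewrite sum_mul_eq.
Qed.

Lemma alpha_big (A : {set U}) : (1 < #|A|)%N -> alpha A = 0.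
Proof.
move=> hA; apply: big1 => o _.
suff -> : (hit o == A) = false by rewrite mulr0.
apply/negbTE; apply: contraTneq hA => <-.
by case: o => [[v [u|]]|] /=; rewrite ?cards1 ?cards0.
Qed.

Lemma alpha0 : alpha finset.set0 = 1 - \sum_u q u.
Proof.
rewrite -rho_sum; apply/eqP; rewrite eq_sym subr_eq; apply/eqP; symmetry.
under eq_bigr => u _ do rewrite -alpha1 /alpha.
rewrite /alpha exchange_big -big_split /=; apply: eq_bigr => o _.
rewrite -mulr_sumr -mulrDr -[RHS]mulr1; congr (_ * _).
case: o => [[v [u|]]|] /=.
- rewrite eq_sym set0_neq1 add0r; under eq_bigr => w _ do rewrite set1_eqE.
  by rewrite (bigD1 u) //= eqxx big1 ?addr0 // => w; rewrite eq_sym => /negbTE ->.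
- by rewrite eqxx big1 ?addr0 // => w _; rewrite set0_neq1.
- by rewrite eqxx big1 ?addr0 // => w _; rewrite set0_neq1.
Qed.


Lemma q_ge0 u : 0 <= q u.
Proof.
apply: divr_ge0; last exact: ler0n.
by apply: sumr_ge0 => v h; exact: x_ge0.
Qed.

Lemma q_le1 u : q u <= 1.
Proof.
have T0' : 0 < T%:R :> R by rewrite ltr0n.
rewrite /q ler_pdivrMr // mul1r; case: Hf => _ _ _ _ /(_ u) h.
by apply: (le_trans h); rewrite ler1n.
Qed.

Lemma q01 u : 0 <= q u <= 1.
Proof. by rewrite q_ge0 q_le1. Qed.

Lemma zeta_alphaC1 u : zeta alpha [set~ u] = 1 - q u.
Proof.
rewrite /zeta zeta_alpha.
transitivity (\sum_o rho o - alpha [set u]); last by rewrite rho_sum alpha1.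
rewrite /alpha -sumrB.
apply: eq_bigr => o _; rewrite -[X in _ = X - _]mulr1 -mulrBr; congr (_ * _).
case: o => [[v [w|]]|] /=; rewrite ?finset.sub0set ?set0_neq1 ?subr0 //.
rewrite finset.sub1set in_setC1 set1_eqE.
by case: eqVneq => _ /=; rewrite ?subrr ?subr0.
Qed.

Lemma prodlaw_sum : \sum_A prodlaw q A = 1.
Proof.
rewrite -zetaT zeta_prodlaw big_pred0 // => u.
by rewrite finset.in_setT.
Qed.

Lemma prodlaw_ge0 A : 0 <= prodlaw q A.
Proof.
apply: prodr_ge0 => u _; case: ifP => _; first exact: q_ge0.
by rewrite subr_ge0 q_le1.
Qed.

Lemma L1_alpha_beta :
  L1 (fun A => alpha A - prodlaw q A) <= 2 * (\sum_u q u) ^+ 2.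
Proof.
set Q := \sum_u q u.
have Q0 : 0 <= Q by apply: sumr_ge0 => u _; exact: q_ge0.
have sd : \sum_A (alpha A - prodlaw q A) = 0.
  by rewrite sumrB alpha_sum prodlaw_sum subrr.
have key : forall A, Num.max (alpha A - prodlaw q A) 0 <=
    \sum_u (q u * Q) * (A == [set u])%:R.
  move=> A; have [n hn] : exists n, #|A| = n by exists #|A|.
  case: n hn => [|[|n]] hn.
  - have -> := cards0_eq hn.
    rewrite big1; last by move=> u _; rewrite set0_neq1 mulr0.
    rewrite max_r // alpha0 subr_le0 /prodlaw.
    rewrite [X in _ <= X](eq_bigr (fun u => 1 - q u)); last by move=> u _; rewrite finset.in_set0.
    exact: weier q01.
  - have /cards1P [u0 ->] : #|A| == 1%N by rewrite hn.
    rewrite (bigD1 u0) //= eqxx mulr1 big1 ?addr0; last first.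
      by move=> w /negbTE hw; rewrite set1_eqE eq_sym hw mulr0.
    rewrite ge_max mulr_ge0 ?q_ge0 // andbT alpha1 /prodlaw (bigD1 u0) //=.
    rewrite finset.in_set1 eqxx.
    rewrite (eq_bigr (fun w => 1 - q w)); last first.
      by move=> w /negbTE hw; rewrite finset.in_set1 hw.
    have hw := weier (fun w => w != u0) q01.
    have hS : \sum_(w | w != u0) q w <= Q.
      by rewrite /Q [X in _ <= X](bigD1 u0) //= lerDr q_ge0.
    have := q_ge0 u0; nra.
  - rewrite alpha_big ?hn // sub0r.
    rewrite max_r; last by rewrite oppr_le0 prodlaw_ge0.
    by apply: sumr_ge0 => u _; rewrite mulr_ge0 ?ler0n // mulr_ge0 ?q_ge0.
rewrite /L1; under eq_bigr => A _ do rewrite norm_max.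
rewrite sumrB sd subr0 -mulr_sumr ler_pM2l ?ltr0n //.
apply: (le_trans (ler_sum _ (fun A _ => key A))).
rewrite exchange_big /= expr2 mulr_suml; apply: ler_sum => u _.
by rewrite sum_mul_eq.
Qed.

Lemma step_hit S o : mmp_step S o = S :|: hit o.
Proof.
case: o => [[v [u|]]|] /=; rewrite ?finset.setU0 //.
case: ifP => h; last by rewrite finset.setUC.
by apply/esym/finset.setUidPl; rewrite finset.sub1set.
Qed.

Lemma foldl_sub (s : seq (round_outcome U V)) S M :
  (foldl (@mmp_step U V) S s \subset M) =
  (S \subset M) && all (fun o => hit o \subset M) s.
Proof.
elim: s S => [|o s IH] S /=; first by rewrite andbT.
by rewrite IH step_hit finset.subUset andbA.
Qed.

Lemma all_prod (X : Type) (P : pred X) (s : seq X) :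
  ((all P s)%:R : R) = \prod_(t <- s) (P t)%:R.
Proof.
elim: s => [|a s IH] /=; first by rewrite big_nil.
by rewrite big_cons -mulnb natrM IH.
Qed.

Lemma run_sub (w : {ffun 'I_T -> round_outcome U V}) M :
  ((mmp_run w \subset M)%:R : R) = \prod_t (hit (w t) \subset M)%:R.
Proof.
rewrite /mmp_run foldl_sub finset.sub0set /= all_map all_prod enumT.
by rewrite /index_enum unlock.
Qed.

Definition pp (w : {ffun 'I_T -> round_outcome U V}) := path_prob E p x w.

Lemma sum_pp_sub M :
  \sum_w pp w * (mmp_run w \subset M)%:R = (zeta alpha M) ^+ T.
Proof.
under eq_bigr => w _ do rewrite run_sub /pp /path_prob -big_split /=.
rewrite -(bigA_distr_bigA (fun (i : 'I_T) (o : round_outcome U V) =>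
  rho o * (hit o \subset M)%:R)) /=.
by rewrite /zeta zeta_alpha prodr_const card_ord.
Qed.

Definition J (M : {set U}) :=
  \sum_(w : {ffun 'I_T -> round_outcome U V}) pp w * (mmp_run w == M)%:R.

Lemma zetaJ M : zeta J M = (zeta alpha M) ^+ T.
Proof.
rewrite -sum_pp_sub /zeta /J exchange_big /=; apply: eq_bigr => w _.
by rewrite -mulr_sumr sum_ind_eq.
Qed.

Lemma J_pw M : J M = pw T alpha M.
Proof. by apply: zeta_inj => N; rewrite zetaJ zeta_pw. Qed.

Lemma sum_pp : \sum_w pp w = 1.
Proof.
have := sum_pp_sub [set: U]%SET; rewrite zetaT alpha_sum expr1n => <-.
by apply: eq_bigr => w _; rewrite finset.subsetT mulr1.
Qed.

Lemma marg_eq u : mmp_marg E p x T u = 1 - (1 - q u) ^+ T.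
Proof.
rewrite -zeta_alphaC1 -sum_pp_sub.
transitivity (\sum_w pp w - \sum_w pp w * (mmp_run w \subset [set~ u])%:R);
  last by rewrite sum_pp.
rewrite -sumrB /mmp_marg big_mkcond /=; apply: eq_bigr => w _; rewrite -/(pp w).
rewrite finset.subsetC finset.sub1set finset.in_setC.
by case: (u \in mmp_run w); rewrite /= ?mulr1 ?mulr0 ?subr0 ?subrr.
Qed.

Lemma prodmarg_pw M :
  prodlaw (mmp_marg E p x T) M = pw T (prodlaw q) M.
Proof.
apply: zeta_inj => N; rewrite zeta_pw !zeta_prodlaw -prodrXl.
by apply: eq_bigr => u _; rewrite marg_eq subKr.
Qed.

Lemma tv_bound : mmp_tv E p x T <= T%:R * (\sum_u q u) ^+ 2.
Proof.
rewrite /mmp_tv sum_ffun_set.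
have -> : \sum_(A : {set U}) `|mmp_joint E p x T [ffun u => u \in A] -
      mmp_prodmarg E p x T [ffun u => u \in A]| =
    L1 (fun A => pw T alpha A - pw T (prodlaw q) A).
  apply: eq_bigr => A _; rewrite -J_pw -prodmarg_pw; congr (`|_ - _|).
    rewrite /mmp_joint /J big_mkcond /=; apply: eq_bigr => w _.
    have -> : ([ffun u => u \in mmp_run w] == [ffun u => u \in A]) = (mmp_run w == A).
      apply/eqP/eqP => [h|->] //; apply/setP => u.
      by move/ffunP: h => /(_ u); rewrite !ffunE.
    by case: (mmp_run w == A); rewrite ?mulr1 ?mulr0.
  by rewrite /mmp_prodmarg /prodlaw; apply: eq_bigr => u _; rewrite ffunE.
have h1 := L1_pw T alpha_ge0 alpha_sum prodlaw_ge0 prodlaw_sum.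
have h2 := L1_alpha_beta.
move: h1 h2; set a := L1 _; set b := L1 _; set Q := \sum_u q u => h1 h2.
have h3 : T%:R * b <= T%:R * (2 * Q ^+ 2) by rewrite ler_wpM2l ?ler0n.
lra.
Qed.

Lemma sumq_le : \sum_u q u <= #|U|%:R / T%:R.
Proof.
have T0' : 0 < T%:R :> R by rewrite ltr0n.
rewrite /q -mulr_suml ler_wpM2r ?invr_ge0 ?ler0n //.
rewrite -sum1_card natr_sum; apply: ler_sum => u _.
by case: Hf => _ _ _ _ /(_ u).
Qed.

Lemma tv_bound2 : mmp_tv E p x T <=
  (#|U|%:R / Num.sqrt T%:R) * (#|U|%:R / Num.sqrt T%:R).
Proof.
have T0' : 0 < T%:R :> R by rewrite ltr0n.
apply: (le_trans tv_bound).
have Q0 : 0 <= \sum_u q u by apply: sumr_ge0 => u _; exact: q_ge0.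
have hQ := sumq_le.
have -> : (#|U|%:R / Num.sqrt T%:R) * (#|U|%:R / Num.sqrt T%:R) =
    T%:R * ((#|U|%:R / T%:R) * (#|U|%:R / T%:R)) :> R.
  have hs : Num.sqrt T%:R * Num.sqrt T%:R = T%:R :> R.
    by rewrite -expr2 sqr_sqrtr ?ler0n.
  rewrite mulrACA -invfM hs; field.
  by rewrite gt_eqF.
rewrite ler_wpM2l ?ler0n // expr2.
by apply: ler_pM.
Qed.

End Round.

Section Expo.
Variable R : realType.

Lemma pow_diff (a b : R) n : 0 <= a <= 1 -> 0 <= b <= 1 ->
  `|a ^+ n - b ^+ n| <= n%:R * `|a - b|.
Proof.
move=> /andP[a0 a1] /andP[b0 b1]; elim: n => [|n IH].
  by rewrite !expr0 subrr normr0 mul0r.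
have e : a ^+ n.+1 - b ^+ n.+1 = a * (a ^+ n - b ^+ n) + b ^+ n * (a - b).
  by rewrite !exprS; ring.
rewrite e mulrSr mulrDl mul1r; apply: (le_trans (ler_normD _ _)).
apply: lerD; rewrite normrM.
  apply: (le_trans _ IH); apply: ler_piMl => //; by rewrite ger0_norm.
apply: ler_piMl => //; rewrite ger0_norm ?exprn_ge0 //.
exact: exprn_ile1.
Qed.

Lemma exp_approx (a : R) (T : nat) : (0 < T)%N -> 0 <= a <= 1 ->
  `|(1 - a / T%:R) ^+ T - expR (- a)| <= T%:R^-1.
Proof.
move=> T0 /andP[a0 a1].
have T0' : 0 < T%:R :> R by rewrite ltr0n.
have T1 : 1 <= T%:R :> R by rewrite ler1n.
set s := a / T%:R.
have s0 : 0 <= s by rewrite divr_ge0 // ltW.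
have s1 : s <= 1 by rewrite /s ler_pdivrMr // mul1r (le_trans a1).
have -> : - a = T%:R * (- s) by rewrite /s; field; rewrite gt_eqF.
rewrite expRM_natl.
set e := expR (- s).
have h1 : 1 - s <= e by have := expR_ge1Dx (- s).
have h2 : 1 + s <= expR s by exact: expR_ge1Dx.
have h3 : e * expR s = 1 by rewrite /e -expRD addNr expR0.
have e0 : 0 < e by exact: expR_gt0.
have h4 : e * (1 + s) <= e * expR s by rewrite ler_wpM2l // ltW.
rewrite h3 in h4.
have e1 : e <= 1 by nra.
have hd : `|1 - s - e| <= s ^+ 2.
  rewrite ler0_norm ?subr_le0 //.
  have h6 : 0 <= s - (1 - e) by lra.
  have h5 := mulr_ge0 s0 h6.
  rewrite expr2; nra.
apply: (le_trans (pow_diff _ _ _)).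
- by rewrite subr_ge0 s1 /=; lra.
- by rewrite (ltW e0) e1.
apply: (le_trans (ler_wpM2l (ler0n _ _) hd)).
have -> : T%:R * s ^+ 2 = a ^+ 2 / T%:R by rewrite /s; field; rewrite gt_eqF.
rewrite -[X in _ <= X]mul1r ler_wpM2r ?invr_ge0 ?ler0n //.
by rewrite expr2; nra.
Qed.
End Expo.

Lemma tv_ge0 (R : realType) (U V : finType) (E : {set U * V}) (p : V -> R)
  (x : U * V -> R) (T : nat) : 0 <= mmp_tv E p x T.
Proof.
by rewrite /mmp_tv mulr_ge0 ?invr_ge0 ?ler0n //; apply: sumr_ge0 => b _.
Qed.

Local Open Scope classical_set_scope.
Local Open Scope ring_scope.

Theorem lemma2 (R : realType) (U V : nat -> finType)
  (E : forall T, {set U T * V T}) (p : forall T, V T -> R)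
  (x : forall T, U T * V T -> R) :
  (forall T, (0 < T)%N -> feasible_instance (E T) (p T) (x T) T) ->
  (fun T : nat => #|U T|%:R / Num.sqrt (T%:R : R)) @ \oo --> 0 ->
  (fun T : nat => mmp_tv (E T) (p T) (x T) T) @ \oo --> 0 /\
  (forall eps : R, 0 < eps -> \forall T \near \oo, forall u : U T,
     `| mmp_marg (E T) (p T) (x T) T u - (1 - expR (- xstar_u (E T) (x T) u)) | < eps).
Proof.
move=> Hf Hs; split.
  apply: (@squeeze_cvgr _ _ _ _ (fun _ => 0)
    (fun T : nat => (#|U T|%:R / Num.sqrt (T%:R : R)) * (#|U T|%:R / Num.sqrt (T%:R : R)))).
  - apply: filterS (nbhs_infty_gt 0) => T /= hT.
    by rewrite tv_ge0 /=; apply: tv_bound2 => //; exact: Hf.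
  - exact: cvg_cst.
    have := cvgM Hs Hs; rewrite mulr0; exact.
move=> eps he.
near=> T; move=> u.
have hT : (0 < T)%N by near: T; exact: nbhs_infty_gt.
have hr : eps^-1 + 1 <= T%:R :> R by near: T; exact: nbhs_infty_ger.
have F := Hf T hT.
rewrite (marg_eq hT F) /q.
have hx : 0 <= xstar_u (E T) (x T) u <= 1.
  apply/andP; split; last by case: F => _ _ _ _ /(_ u).
  by apply: sumr_ge0 => v h; exact: (x_ge0 F).
set A := (_ ^+ T); set B := expR _.
have -> : 1 - A - (1 - B) = - (A - B) by ring.
rewrite normrN.
apply: (le_lt_trans (exp_approx hT hx)).
rewrite -div1r ltr_pdivrMr ?ltr0n //.
have := ler_wpM2l (ltW he) hr; rewrite mulrDr mulfV ?gt_eqF // mulr1.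
lra.
Unshelve. all: end_near.
Qed.
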